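(* Consider the risk-averse quantal response mean-field game described in the context, assume the Lipschitz condition on $f_t,r_t$ and that $\nu$ is $m$-strongly convex for some $m>0$. Consider fixed-point iteration (FPI): starting from any $\pi^0\in\Pi$, set $\pi^{j+1}=\mathcal{B}^{\mathrm{RQE}}_{\mathrm{opt}}(\mathcal{B}^{\mathrm{RQE}}_{\mathrm{prop}}(\pi^j))$. Then for all sufficiently large $\alpha$, FPI converges to an MF-RQE: the sequence $(\pi^j)$ converges in $d_\Pi$ to a policy $\pi^*$ such that $(\pi^*,\mathcal{B}^{\mathrm{RQE}}_{\mathrm{prop}}(\pi^* ))$ is an MF-RQE.
   Context: Let $\mathcal{X},\mathcal{U}$ be finite nonempty sets and $T\ge1$. For finite $E$, $\mathcal{P}(E)$ is the set of probability vectors on $E$ and $d_{TV}(\mu,\mu')=\frac12\|\mu-\mu'\|_1$. For $t\in\{0,\dots,T-1\}$: transition kernels $f_t(x'\mid x,u,\mu)$ (a distribution over $x'\in\mathcal{X}$ for each $x,u$ and $\mu\in\mathcal{P}(\mathcal{X})$) and rewards $r_t:\mathcal{X}\times\mathcal{U}\times\mathcal{P}(\mathcal{X})\to[-R_{\max},R_{\max}]$. Lipschitz condition: there are $L_f,L_r>0$ with $\sum_{x'}|f_t(x'\mid x,u,\mu)-f_t(x'\mid x,u,\mu')|\le L_fd_{TV}(\mu,\mu')$ and $|r_t(x,u,\mu)-r_t(x,u,\mu')|\le L_rd_{TV}(\mu,\mu')$ for all $x,u,\mu,\mu',t$. A policy is $\pi=(\pi_0,\dots,\pi_{T-1})$ with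 $\pi_t(\cdot\mid x)\in\mathcal{P}(\mathcal{U})$; $\Pi_t$ is the set of time-$t$ decision rules, $\Pi$ the set of policies, and $d_\Pi(\pi,\pi')=\max_{x\in\mathcal{X},t<T}d_{TV}(\pi_t(\cdot\mid x),\pi'_t(\cdot\mid x))$. Given $\pi$ and $\mu_0$, the mean-field flow $(\mu_0,\dots,\mu_T)$ satisfies $\mu_{t+1}(x')=\sum_x\sum_uf_t(x'\mid x,u,\mu_t)\pi_t(u\mid x)\mu_t(x)$. Q-functions: $Q^\pi_{\mu,T-1}(x,u)=r_{T-1}(x,u,\mu_{T-1})$, $Q^\pi_{\mu,t}(x,u)=r_t(x,u,\mu_t)+\sum_{x'}f_t(x'\mid x,u,\mu_t)V^\pi_{\mu,t+1}(x')$ for $t<T-1$, with $V^\pi_{\mu,t}(x)=\sum_u\pi_t(u\mid x)Q^\pi_{\mu,t}(x,u)$. Data: a finite set $\mathbb{M}=\{\mu_0^1,\dots,\mu_0^K\}\subset\mathcal{P}(\mathcal{X})$ with probabilities $w_k=\Gamma^*(\mu_0^k)$; $\tau>0$; $\alpha>0$; a regularizer $\nu:\mathcal{P}(\mathcal{U})\to\mathbb{R}$; $\nu$ is $m$-strongly convex means $\nu(\lambda p+(1-\lambda)q)\le\lambda\nu(p)+(1-\lambda)\nu(q)-\frac m2\lambda(1-\lambda)\|p-q\|_2^2$ for all $p,q\in\mathcal{P}(\mathcal{U})$, $\lambda\in[0,1]$. A set of flows is $\mathcal{S}=\{\mu^1,\dots,\mu^K\}$ with $\mu^k$ a flow starting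 at $\mu_0^k$. Cost: $c_t^{\pi,\alpha}(x;\mathcal{S})=\frac1\tau\log\big(\sum_kw_k\exp(-\tau\sum_u\pi_t(u\mid x)Q^\pi_{\mu^k,t}(x,u))\big)+\alpha\nu(\pi_t(\cdot\mid x))$. $(\pi'_t,\pi_{-t})$ is $\pi$ with time-$t$ component replaced by $\pi'_t\in\Pi_t$. $\mathcal{B}^{\mathrm{RQE}}_{\mathrm{opt}}(\mathcal{S})$ is the (unique) policy $\pi$ such that for all $t,x$, $\pi_t(\cdot\mid x)$ minimizes $c_t^{(\pi'_t,\pi_{-t}),\alpha}(x;\mathcal{S})$ over $\pi'_t\in\Pi_t$. $\mathcal{B}^{\mathrm{RQE}}_{\mathrm{prop}}(\pi)$ is the set of flows generated by $\pi$ from each $\mu_0^k\in\mathbb{M}$. An MF-RQE is a pair $(\pi^*,\mathcal{S}^* )$ with $\pi^*=\mathcal{B}^{\mathrm{RQE}}_{\mathrm{opt}}(\mathcal{S}^* )$ and $\mathcal{B}^{\mathrm{RQE}}_{\mathrm{prop}}(\pi^* )=\mathcal{S}^*$. *)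

(* Defs.v *)
From HB Require Import structures.
From mathcomp Require Import all_boot all_order all_algebra.
From mathcomp Require Import reals sequences exp.
Set Implicit Arguments. Unset Strict Implicit. Unset Printing Implicit Defensive.
Import Order.TTheory GRing.Theory Num.Theory.
Local Open Scope ring_scope.

Section MFRQE.
Variables (R : realType) (X U : finType).

Definition isProb (E : finType) (p : E -> R) : Prop :=
  (forall e, 0 <= p e) /\ \sum_(e : E) p e = 1.

Definition dTV (E : finType) (p q : E -> R) : R :=
  2^-1 * \sum_(e : E) `|p e - q e|.

(* Time is indexed by nat; only t < T (resp. t <= T for flows) is relevant.
   Transition kernel: f t mu x u x' = f_t(x' | x, u, mu).
   Reward:            r t x u mu   = r_t(x, u, mu).
   Policy:            pi t x u     = pi_t(u | x). *)

Definition isDecisionRule (p : X -> U -> R) : Prop := forall x, isProb (p x).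

Definition isPolicy (T : nat) (pi : nat -> X -> U -> R) : Prop :=
  forall t, (t < T)%N -> isDecisionRule (pi t).

Definition dPi (T : nat) (pi pi' : nat -> X -> U -> R) : R :=
  \big[Num.max/0]_(t < T) \big[Num.max/0]_(x : X) dTV (pi t x) (pi' t x).

Fixpoint flow (f : nat -> (X -> R) -> X -> U -> X -> R)
    (pi : nat -> X -> U -> R) (mu0 : X -> R) (t : nat) : X -> R :=
  match t with
  | 0 => mu0
  | t'.+1 => fun x' =>
      \sum_(x : X) \sum_(u : U)
        f t' (flow f pi mu0 t') x u x' * pi t' x u * flow f pi mu0 t' x
  end.

(* Qb k t = Q-function at time t, computed with k remaining steps after t *)
Fixpoint Qb (f : nat -> (X -> R) -> X -> U -> X -> R)
    (r : nat -> X -> U -> (X -> R) -> R)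
    (pi : nat -> X -> U -> R) (mu : nat -> X -> R) (k t : nat) : X -> U -> R :=
  match k with
  | 0 => fun x u => r t x u (mu t)
  | k'.+1 => fun x u =>
      r t x u (mu t) +
      \sum_(x' : X) f t (mu t) x u x' *
        (\sum_(u' : U) pi t.+1 x' u' * Qb f r pi mu k' t.+1 x' u')
  end.

Definition Qfun (T : nat) f r pi mu (t : nat) : X -> U -> R :=
  Qb f r pi mu (T.-1 - t) t.

Definition repl (pi : nat -> X -> U -> R) (t : nat) (p : X -> U -> R) :
  nat -> X -> U -> R := fun s => if s == t then p else pi s.

Definition cost (T K : nat) f r (w : 'I_K -> R) (tau alpha : R)
    (nu : (U -> R) -> R) (pi : nat -> X -> U -> R)
    (S : 'I_K -> nat -> X -> R) (t : nat) (x : X) : R :=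
  tau^-1 * ln (\sum_(k < K) w k *
      expR (- tau * \sum_(u : U) pi t x u * Qfun T f r pi (S k) t x u))
  + alpha * nu (pi t x).

Definition IsBopt (T K : nat) f r w tau alpha nu
    (S : 'I_K -> nat -> X -> R) (pi : nat -> X -> U -> R) : Prop :=
  isPolicy T pi /\
  forall t, (t < T)%N -> forall x (p : X -> U -> R), isDecisionRule p ->
    cost T f r w tau alpha nu pi S t x <=
    cost T f r w tau alpha nu (repl pi t p) S t x.

Definition Bprop (K : nat) f (mu0 : 'I_K -> X -> R) (pi : nat -> X -> U -> R) :
  'I_K -> nat -> X -> R := fun k => flow f pi (mu0 k).

Definition isFlowSet (T K : nat) (mu0 : 'I_K -> X -> R)
    (S : 'I_K -> nat -> X -> R) : Prop :=
  forall k, S k 0%N = mu0 k /\ forall t, (t <= T)%N -> isProb (S k t).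

Definition IsMFRQE (T K : nat) f r w tau alpha nu mu0
    (pi : nat -> X -> U -> R) (S : 'I_K -> nat -> X -> R) : Prop :=
  IsBopt T f r w tau alpha nu S pi /\ Bprop f mu0 pi = S.

Definition strongly_convex (m : R) (nu : (U -> R) -> R) : Prop :=
  forall p q, isProb p -> isProb q -> forall lam : R, 0 <= lam <= 1 ->
    nu (fun u => lam * p u + (1 - lam) * q u) <=
    lam * nu p + (1 - lam) * nu q
    - m / 2 * lam * (1 - lam) * \sum_(u : U) (p u - q u) ^+ 2.

End MFRQE.

(* Main.v *)
Require Import Defs.
From HB Require Import structures.
From mathcomp Require Import all_boot all_order all_algebra.
From mathcomp Require Import reals sequences exp.
From mathcomp Require Import ring lra zify.
Set Implicit Arguments. Unset Strict Implicit. Unset Printing Implicit Defensive.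
Import Order.TTheory GRing.Theory Num.Theory.
Local Open Scope ring_scope.
Section P1.
Variable R : realType.

Lemma expR_mid (x y : R) : expR ((x + y) / 2) <= (expR x + expR y) / 2.
Proof.
have -> : (x + y) / 2 = x / 2 + y / 2 by rewrite mulrDl.
rewrite expRD.
have ex : expR x = expR (x/2) * expR (x/2) by rewrite -expRD -splitr.
have ey : expR y = expR (y/2) * expR (y/2) by rewrite -expRD -splitr.
rewrite ex ey.
have := sqr_ge0 (expR (x/2) - expR (y/2)).
nra.
Qed.

Lemma ln_le_sub1 (y : R) : 0 < y -> ln y <= y - 1.
Proof.
move=> y0; have h := @le_ln1Dx R (y - 1).
have e : 1 + (y - 1) = y by ring.
rewrite e in h; apply: h; lra.
Qed.

Lemma expR_sub1_le (x : R) : expR x - 1 <= x * expR x.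
Proof.
have h := expR_ge1Dx (- x).
rewrite expRN in h.
have e0 := expR_gt0 x.
have : (1 - x) * expR x <= 1.
  by have := ler_wpM2r (ltW e0) h; rewrite mulVf ?gt_eqF.
nra.
Qed.

Lemma expR_abs_sub1 (d D : R) : `|d| <= D -> `|expR d - 1| <= expR D - 1.
Proof.
move=> hd.
have hD : 0 <= D by apply: le_trans hd.
have h1 := expR_ge1Dx D. have h2 := expR_ge1Dx (- D).
case: (lerP 0 d) => d0.
  rewrite ger0_norm; last by rewrite subr_ge0 -expR0 ler_expR.
  have : d <= D by rewrite -(ger0_norm d0).
  rewrite -ler_expR; lra.
rewrite ler0_norm; last by rewrite subr_le0 -expR0 ler_expR ltW.
have : - D <= d by rewrite -lerNl -(ltr0_norm d0).
rewrite -ler_expR => h3.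
have : expR D * expR (- D) = 1 by rewrite -expRD subrr expR0.
have := expR_gt0 D. have := expR_gt0 (- D).
nra.
Qed.

End P1.

Section LSE.
Variables (R : realType) (K : nat) (w : 'I_K -> R).
Hypothesis hw : isProb w.

Definition Zs (a : 'I_K -> R) := \sum_(k < K) w k * expR (a k).

Lemma Zs_gt0 a : 0 < Zs a.
Proof.
have h0 : forall k : 'I_K, true -> 0 <= w k * expR (a k).
  by move=> k _; rewrite mulr_ge0 ?expR_ge0 //; case: hw.
rewrite lt_def sumr_ge0 ?andbT //; apply/eqP => /(psumr_eq0P h0) H.
case: hw => _; rewrite big1; first by move/eqP; rewrite eq_sym oner_eq0.
move=> k _.
by have /eqP := H k isT; rewrite mulf_eq0 expR_eq0 orbF => /eqP.
Qed.

Lemma Zs_le a b : (forall k, a k <= b k) -> Zs a <= Zs b.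
Proof.
move=> h; apply: ler_sum => k _; apply: ler_wpM2l; first by case: hw.
by rewrite ler_expR.
Qed.

Lemma Zs_shift a c : Zs (fun k => a k + c) = expR c * Zs a.
Proof.
rewrite /Zs big_distrr /=; apply: eq_bigr => k _; rewrite expRD; ring.
Qed.

Lemma LSE_lip a b c : (forall k, a k <= b k + c) -> ln (Zs a) <= ln (Zs b) + c.
Proof.
move=> h.
have := Zs_le h; rewrite Zs_shift => h2.
have : ln (Zs a) <= ln (expR c * Zs b).
  by rewrite ler_ln // posrE ?mulr_gt0 ?expR_gt0 ?Zs_gt0.
rewrite lnM ?posrE ?expR_gt0 ?Zs_gt0 // expRK; lra.
Qed.

Lemma LSE_mid a b :
  ln (Zs (fun k => (a k + b k) / 2)) <= (ln (Zs a) + ln (Zs b)) / 2.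
Proof.
set A := Zs a; set B := Zs b.
have A0 : 0 < A by apply: Zs_gt0.
have B0 : 0 < B by apply: Zs_gt0.
set E := expR ((ln A + ln B) / 2).
have hle : Zs (fun k => (a k + b k) / 2) <=
   \sum_(k < K) w k * ((expR (a k) / A + expR (b k) / B) / 2 * E).
  apply: ler_sum => k _; apply: ler_wpM2l; first by case: hw.
  have -> : (a k + b k) / 2 = ((a k - ln A) + (b k - ln B)) / 2 + (ln A + ln B) / 2.
    by rewrite !mulrDl; ring.
  rewrite expRD ler_wpM2r ?expR_ge0 //.
  by rewrite -(lnK (A0 : A \in Num.pos)) -(lnK (B0 : B \in Num.pos)) -!expRB
     !lnK // expR_mid.
have heq : \sum_(k < K) w k * ((expR (a k) / A + expR (b k) / B) / 2 * E) = E.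
  have -> : \sum_(k < K) w k * ((expR (a k) / A + expR (b k) / B) / 2 * E) =
     (Zs a / A + Zs b / B) / 2 * E.
    rewrite /Zs !mulr_suml -big_split /= mulr_suml mulr_suml.
    by apply: eq_bigr => k _; ring.
  rewrite -[Zs a]/A -[Zs b]/B !divff ?gt_eqF //; lra.
rewrite heq in hle.
have : ln (Zs (fun k => (a k + b k) / 2)) <= ln E.
  by rewrite ler_ln // posrE ?expR_gt0 ?Zs_gt0.
by rewrite /E expRK.
Qed.

Lemma avg_pert (s g e : 'I_K -> R) (c G : R) :
  (forall k, 0 <= s k) -> 0 < \sum_k s k ->
  (forall k, `|e k| <= c) -> (forall k, `|g k| <= G) ->
  `|(\sum_k s k * expR (e k) * g k) / (\sum_k s k * expR (e k))
    - (\sum_k s k * g k) / (\sum_k s k)| <= G * (expR (2 * c) - 1).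
Proof.
move=> s0 S0 he hg.
have [k0 _] : exists k : 'I_K, True.
  move: S0; clear; case: K s => [|n] s; [by rewrite big_ord0 ltxx | by exists ord0].
have c0 : 0 <= c by apply: le_trans (he k0).
have G0 : 0 <= G by apply: le_trans (hg k0).
set S := \sum_k s k.
set T := \sum_k s k * expR (e k).
have rb : forall k, expR (- c) <= expR (e k) <= expR c.
  move=> k; rewrite !ler_expR; have := he k; rewrite ler_norml; lra.
have TS : expR (- c) * S <= T.
  rewrite /S big_distrr; apply: ler_sum => k _ /=.
  have := rb k; have := s0 k; nra.
have T0 : 0 < T by apply: lt_le_trans TS; rewrite mulr_gt0 ?expR_gt0.
have -> : (\sum_k s k * expR (e k) * g k) / T - (\sum_k s k * g k) / S =
   ((\sum_k s k * expR (e k) * g k) * S - (\sum_k s k * g k) * T) / (T * S).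
  by field; rewrite ?gt_eqF.
have hnum : (\sum_k s k * expR (e k) * g k) * S - (\sum_k s k * g k) * T =
   \sum_k \sum_l (s k * s l * g k * (expR (e k) - expR (e l))).
  rewrite /S /T !big_distrl -sumrB; apply: eq_bigr => k _ /=.
  rewrite !big_distrr -sumrB; apply: eq_bigr => l _ /=; ring.
rewrite hnum normrM normfV (gtr0_norm (mulr_gt0 T0 S0)) ler_pdivrMr ?mulr_gt0 //.
have M0 : 0 <= G * (expR (2 * c) - 1).
  by rewrite mulr_ge0 // subr_ge0; apply: le_trans (expR_ge1Dx _); lra.
have key : (expR (2 * c) - 1) * expR (- c) = expR c - expR (- c).
  by rewrite mulrBl mul1r -expRD; have -> : 2 * c + - c = c by ring.
apply: le_trans (_ : G * (expR (2 * c) - 1) * (expR (- c) * S * S) <= _); last first.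
  apply: ler_wpM2l => //; apply: ler_wpM2r => //; exact: ltW.
have -> : G * (expR (2 * c) - 1) * (expR (- c) * S * S) =
   \sum_k \sum_l (s k * s l * (G * (expR c - expR (- c)))).
  rewrite -key.
  set C := G * ((expR (2 * c) - 1) * expR (- c)).
  have -> : \sum_k \sum_l (s k * s l * C) = \sum_k (s k * S * C).
    by apply: eq_bigr => k _; rewrite -mulr_suml -mulr_sumr.
  rewrite -mulr_suml -mulr_suml /C /S; ring.
apply: le_trans (ler_norm_sum _ _ _) _; apply: ler_sum => k _.
apply: le_trans (ler_norm_sum _ _ _) _; apply: ler_sum => l _.
rewrite !normrM (ger0_norm (s0 k)) (ger0_norm (s0 l)) -!mulrA.
apply: ler_wpM2l => //; apply: ler_wpM2l => //; apply: ler_pM => //.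
have := rb k; have := rb l; rewrite ler_norml; lra.
Qed.

End LSE.
Lemma ord_inhab (R : realType) n (F : 'I_n -> R) :
  0 < \sum_(k < n) F k -> exists k : 'I_n, True.
Proof. by case: n F => [|n] F; [rewrite big_ord0 ltxx | exists ord0]. Qed.

Section LSE2.
Variables (R : realType) (K : nat) (w : 'I_K -> R).
Hypothesis hw : isProb w.

Lemma LSE_mixed (a b d : 'I_K -> R) (c D : R) :
  (forall k, `|a k - b k| <= c) -> (forall k, `|d k| <= D) ->
  ln (Zs w (fun k => a k + d k)) - ln (Zs w a)
  - (ln (Zs w (fun k => b k + d k)) - ln (Zs w b))
  <= (expR D - 1) * (expR (2 * c) - 1) * expR D.
Proof.
move=> hab hd.
have Za := Zs_gt0 hw a; have Zb := Zs_gt0 hw b.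
have Zad := Zs_gt0 hw (fun k => a k + d k); have Zbd := Zs_gt0 hw (fun k => b k + d k).
set Ra := Zs w (fun k => a k + d k) / Zs w a.
set Rb := Zs w (fun k => b k + d k) / Zs w b.
have Ra0 : 0 < Ra by rewrite divr_gt0.
have Rb0 : 0 < Rb by rewrite divr_gt0.
have -> : ln (Zs w (fun k => a k + d k)) - ln (Zs w a) = ln Ra by rewrite ln_div.
have -> : ln (Zs w (fun k => b k + d k)) - ln (Zs w b) = ln Rb by rewrite ln_div.
rewrite -ln_div ?posrE //.
apply: le_trans (ln_le_sub1 (divr_gt0 Ra0 Rb0)) _.
have [k0 _] := ord_inhab Za.
have D0 : 0 <= D by apply: le_trans (normr_ge0 _) (hd k0).
have Rbge : expR (- D) <= Rb.
  rewrite /Rb ler_pdivlMr // -Zs_shift; apply: (Zs_le hw) => k /=.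
  have := hd k; rewrite ler_norml; lra.
have havg := @avg_pert R K (fun k => w k * expR (b k)) (fun k => expR (d k) - 1)
   (fun k => a k - b k) c (expR D - 1).
have e1 : \sum_k w k * expR (b k) * expR (a k - b k) * (expR (d k) - 1) =
          Zs w (fun k => a k + d k) - Zs w a.
  rewrite /Zs -sumrB; apply: eq_bigr => k _ /=.
  rewrite expRB expRD; field; by rewrite gt_eqF ?expR_gt0.
have e2 : \sum_k w k * expR (b k) * expR (a k - b k) = Zs w a.
  rewrite /Zs; apply: eq_bigr => k _ /=.
  rewrite expRB; field; by rewrite gt_eqF ?expR_gt0.
have e3 : \sum_k w k * expR (b k) * (expR (d k) - 1) =
          Zs w (fun k => b k + d k) - Zs w b.
  rewrite /Zs -sumrB; apply: eq_bigr => k _ /=.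
  rewrite expRD; ring.
rewrite e1 e2 e3 in havg.
have {havg} h : `|Ra - Rb| <= (expR D - 1) * (expR (2 * c) - 1).
  have <- : (Zs w (fun k => a k + d k) - Zs w a) / Zs w a -
            (Zs w (fun k => b k + d k) - Zs w b) / Zs w b = Ra - Rb.
    rewrite /Ra /Rb !mulrBl !divff ?gt_eqF //; ring.
  apply: havg.
  - by move=> k; rewrite mulr_ge0 ?expR_ge0 //; case: hw.
  - exact: Zb.
  - exact: hab.
  - by move=> k; apply: expR_abs_sub1.
have -> : Ra / Rb - 1 = (Ra - Rb) / Rb by field; rewrite gt_eqF.
have iRb : Rb^-1 <= expR D.
  rewrite -(invrK (expR D)) lef_pV2 ?posrE ?invr_gt0 ?expR_gt0 //.
  by rewrite -expRN.
apply: le_trans (ler_norm _) _.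
rewrite normrM (@gtr0_norm _ Rb^-1); last by rewrite invr_gt0.
apply: ler_pM; [exact: normr_ge0 | by rewrite invr_ge0; apply: ltW | exact: h | exact: iRb].
Qed.
End LSE2.
Lemma cs (R : realType) (U : finType) (x : U -> R) :
  (\sum_u `|x u|) ^+ 2 <= #|U|%:R * \sum_u x u ^+ 2.
Proof.
set N2 := \sum_u x u ^+ 2.
have hA : \sum_(u : U) \sum_(u' : U) x u' ^+ 2 = #|U|%:R * N2.
  by rewrite sumr_const mulr_natl.
have hA' : \sum_(u : U) \sum_(u' : U) x u ^+ 2 = #|U|%:R * N2.
  by rewrite exchange_big /=.
rewrite expr2 big_distrl /=.
have -> : \sum_u `|x u| * \sum_u0 `|x u0| = \sum_u \sum_u' `|x u| * `|x u'|.
  by apply: eq_bigr => u _; rewrite big_distrr.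
apply: le_trans (_ : \sum_u \sum_u' (x u ^+ 2 + x u' ^+ 2) / 2 <= _).
  apply: ler_sum => u _; apply: ler_sum => u' _.
  have := sqr_ge0 (`|x u| - `|x u'|).
  rewrite -(real_normK (num_real (x u))) -(real_normK (num_real (x u'))).
  nra.
have -> : \sum_u \sum_u' (x u ^+ 2 + x u' ^+ 2) / 2 =
   (\sum_(u : U) \sum_(u' : U) x u ^+ 2 + \sum_(u : U) \sum_(u' : U) x u' ^+ 2) / 2.
  rewrite mulrDl !mulr_suml -big_split /=; apply: eq_bigr => u _.
  by rewrite mulr_suml -big_split /=; apply: eq_bigr => u0 _; ring.
rewrite hA hA'; lra.
Qed.

Lemma abs_sum_mul_le (R : realType) (U : finType) (x y : U -> R) (M : R) :
  (forall u, `|y u| <= M) -> `|\sum_u x u * y u| <= (\sum_u `|x u|) * M.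
Proof.
move=> hy; apply: le_trans (ler_norm_sum _ _ _) _.
rewrite mulr_suml; apply: ler_sum => u _; rewrite normrM.
by apply: ler_wpM2l.
Qed.

Lemma prob_l1_le2 (R : realType) (U : finType) (p q : U -> R) :
  isProb p -> isProb q -> \sum_u `|p u - q u| <= 2.
Proof.
move=> [p0 p1] [q0 q1].
apply: le_trans (_ : \sum_u (p u + q u) <= _).
  apply: ler_sum => u _; rewrite ler_norml; have := p0 u; have := q0 u; lra.
rewrite big_split /= p1 q1; lra.
Qed.
Section Argmin.
Variables (R : realType) (U : finType) (K : nat) (w : 'I_K -> R).
Hypothesis hw : isProb w.
Variables (tau alpha m : R) (nu : (U -> R) -> R).
Hypotheses (tau0 : 0 < tau) (alpha0 : 0 < alpha) (m0 : 0 < m).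
Hypothesis hnu : strongly_convex m nu.

Definition alph (Q : 'I_K -> U -> R) (p : U -> R) : 'I_K -> R :=
  fun k => - tau * \sum_u p u * Q k u.
Definition Fq (Q : 'I_K -> U -> R) (p : U -> R) := tau^-1 * ln (Zs w (alph Q p)).

Lemma Fq_mid Q p1 p2 :
  Fq Q (fun u => 2^-1 * p1 u + (1 - 2^-1) * p2 u) <= (Fq Q p1 + Fq Q p2) / 2.
Proof.
rewrite /Fq.
have -> : alph Q (fun u => 2^-1 * p1 u + (1 - 2^-1) * p2 u) =
          (fun k => (alph Q p1 k + alph Q p2 k) / 2).
  apply: boolp.funext => k; rewrite /alph !mulr_sumr mulrDl !mulr_suml -big_split /=.
  by apply: eq_bigr => u _; field.
rewrite -mulrDr -mulrA; apply: ler_wpM2l; first by rewrite invr_ge0 ltW.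
exact: LSE_mid.
Qed.

Definition Kx (B : R) := 1 + 2 * tau * B * expR (8 * tau * B).

Lemma Fq_cross (B d : R) (Q1 Q2 : 'I_K -> U -> R) (p1 p2 : U -> R) :
  0 <= B -> 0 <= d -> d <= 2 * B ->
  (forall k u, `|Q1 k u| <= B) -> (forall k u, `|Q2 k u| <= B) ->
  (forall k u, `|Q1 k u - Q2 k u| <= d) -> isProb p1 -> isProb p2 ->
  Fq Q1 p2 - Fq Q1 p1 + Fq Q2 p1 - Fq Q2 p2 <=
  Kx B * d * \sum_u `|p1 u - p2 u|.
Proof.
move=> B0 d0 dB hQ1 hQ2 hQ hp1 hp2.
set v1 := \sum_u `|p1 u - p2 u|.
have v10 : 0 <= v1 by rewrite sumr_ge0 // => u _.
have v12 : v1 <= 2 by apply: prob_l1_le2.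
set a := alph Q1 p1; set b := alph Q2 p1.
set dd := fun k => alph Q1 p2 k - a k.
set dd' := fun k => alph Q2 p2 k - b k.
have ea : alph Q1 p2 = (fun k => a k + dd k).
  by apply: boolp.funext => k; rewrite /dd addrC subrK.
have eb : alph Q2 p2 = (fun k => b k + dd' k).
  by apply: boolp.funext => k; rewrite /dd' addrC subrK.
have hab : forall k, `|a k - b k| <= tau * d.
  move=> k.
  have -> : a k - b k = tau * \sum_u p1 u * (Q2 k u - Q1 k u).
    rewrite /a /b /alph !mulr_sumr -sumrB; apply: eq_bigr => u _; ring.
  rewrite normrM (gtr0_norm tau0) ler_pM2l //.
  apply: le_trans (abs_sum_mul_le _ (M := d) _) _.
    by move=> u; rewrite distrC.
  case: hp1 => p10 p11.
  have -> : \sum_u `|p1 u| = 1 by rewrite -p11; apply: eq_bigr => u _; rewrite ger0_norm.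
  by rewrite mul1r.
have hdd : forall k, `|dd k| <= tau * B * v1.
  move=> k.
  have -> : dd k = tau * \sum_u (p1 u - p2 u) * Q1 k u.
    rewrite /dd /a /alph !mulr_sumr -sumrB; apply: eq_bigr => u _; ring.
  rewrite normrM (gtr0_norm tau0) -mulrA ler_pM2l // mulrC.
  exact: abs_sum_mul_le.
have hdd' : forall k, dd k <= dd' k + tau * d * v1.
  move=> k.
  have e : dd k - dd' k = tau * \sum_u (p1 u - p2 u) * (Q1 k u - Q2 k u).
    rewrite /dd /dd' /a /b /alph !mulr_sumr -!sumrB.
    by apply: eq_bigr => u _; ring.
  suff : `|dd k - dd' k| <= tau * d * v1 by rewrite ler_norml; lra.
  rewrite e normrM (gtr0_norm tau0) -mulrA ler_pM2l // mulrC.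
  exact: abs_sum_mul_le.
set c := tau * d; set D := tau * B * v1.
have T1 := LSE_mixed hw hab hdd.
have T2' : ln (Zs w (fun k => b k + dd k)) <= ln (Zs w (fun k => b k + dd' k)) + tau * d * v1.
  apply: (LSE_lip hw) => k; have := hdd' k; lra.
have c0 : 0 <= c := mulr_ge0 (ltW tau0) d0.
have D0 : 0 <= D := mulr_ge0 (mulr_ge0 (ltW tau0) B0) v10.
have P : (expR D - 1) * (expR (2 * c) - 1) * expR D <= 2 * c * D * expR (8 * tau * B).
  have h1 : expR D - 1 <= D * expR D := expR_sub1_le D.
  have h2 : expR (2 * c) - 1 <= 2 * c * expR (2 * c) := expR_sub1_le _.
  have g1 : 0 <= expR D - 1 by rewrite subr_ge0; apply: le_trans (expR_ge1Dx _); lra.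
  have g2 : 0 <= expR (2 * c) - 1 by rewrite subr_ge0; apply: le_trans (expR_ge1Dx _); lra.
  apply: le_trans (_ : D * expR D * (2 * c * expR (2 * c)) * expR D <= _).
    apply: ler_wpM2r; first exact: expR_ge0.
    by apply: ler_pM.
  have -> : D * expR D * (2 * c * expR (2 * c)) * expR D =
            2 * c * D * expR (D + 2 * c + D) by rewrite !expRD; ring.
  apply: ler_wpM2l; first by apply: mulr_ge0 (mulr_ge0 _ c0) D0.
  rewrite ler_expR /D /c.
  have : tau * B * v1 <= tau * B * 2 by apply: ler_wpM2l => //; exact: mulr_ge0 (ltW tau0) B0.
  have : tau * d <= tau * (2 * B) by apply: ler_wpM2l => //; exact: ltW.
  lra.
have Lam : ln (Zs w (fun k => a k + dd k)) - ln (Zs w a)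
     - ln (Zs w (fun k => b k + dd' k)) + ln (Zs w b) <= tau * (Kx B * d * v1).
  have -> : tau * (Kx B * d * v1) = tau * d * v1 + 2 * c * D * expR (8 * tau * B).
    by rewrite /Kx /c /D; ring.
  lra.
rewrite /Fq ea eb -/a -/b.
rewrite -(ler_pM2l tau0).
have -> : tau * (tau^-1 * ln (Zs w (fun k => a k + dd k)) - tau^-1 * ln (Zs w a) +
     tau^-1 * ln (Zs w b) - tau^-1 * ln (Zs w (fun k => b k + dd' k))) =
   ln (Zs w (fun k => a k + dd k)) - ln (Zs w a)
     - ln (Zs w (fun k => b k + dd' k)) + ln (Zs w b).
  by field; rewrite gt_eqF.
exact: Lam.
Qed.

Definition Kc (B : R) := 2 * #|U|%:R * Kx B / m.

Lemma Kx_ge0 B : 0 <= B -> 0 <= Kx B.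
Proof.
move=> B0; rewrite /Kx; have : 0 <= 2 * tau * B * expR (8 * tau * B).
  by rewrite mulr_ge0 ?expR_ge0 // mulr_ge0 // mulr_ge0 // ltW.
lra.
Qed.

Lemma Kc_ge0 B : 0 <= B -> 0 <= Kc B.
Proof.
move=> B0; rewrite /Kc divr_ge0 ?(ltW m0) // mulr_ge0 ?Kx_ge0 //.
by rewrite mulr_ge0.
Qed.

Lemma argmin_core (B d : R) (Q1 Q2 : 'I_K -> U -> R) (p1 p2 : U -> R) :
  0 <= B -> 0 <= d -> d <= 2 * B ->
  (forall k u, `|Q1 k u| <= B) -> (forall k u, `|Q2 k u| <= B) ->
  (forall k u, `|Q1 k u - Q2 k u| <= d) -> isProb p1 -> isProb p2 ->
  (forall q, isProb q -> Fq Q1 p1 + alpha * nu p1 <= Fq Q1 q + alpha * nu q) ->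
  (forall q, isProb q -> Fq Q2 p2 + alpha * nu p2 <= Fq Q2 q + alpha * nu q) ->
  \sum_u `|p1 u - p2 u| <= Kc B * d / alpha.
Proof.
move=> B0 d0 dB hQ1 hQ2 hQ hp1 hp2 min1 min2.
set v1 := \sum_u `|p1 u - p2 u|.
have v10 : 0 <= v1 by rewrite sumr_ge0 // => u _.
set N2 := \sum_u (p1 u - p2 u) ^+ 2.
set mid := fun u => 2^-1 * p1 u + (1 - 2^-1) * p2 u.
have hmid : isProb mid.
  case: hp1 => p10 p11; case: hp2 => p20 p21; split.
    move=> u; rewrite /mid; have := p10 u; have := p20 u; lra.
  rewrite /mid big_split /= -!mulr_sumr p11 p21; lra.
have hm1 := min1 mid hmid; have hm2 := min2 mid hmid.
have F1 := Fq_mid Q1 p1 p2; have F2 := Fq_mid Q2 p1 p2.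
have SC := hnu hp1 hp2 (lam := 2^-1) (ltac:(apply/andP; split; lra)).
have aSC := ler_wpM2l (ltW alpha0) SC.
have e : alpha * (2^-1 * nu p1 + (1 - 2^-1) * nu p2 -
                  m / 2 * 2^-1 * (1 - 2^-1) * N2) =
         2^-1 * (alpha * nu p1) + 2^-1 * (alpha * nu p2) - alpha * m * N2 / 8.
  by field.
rewrite e in aSC.
have cross := Fq_cross B0 d0 dB hQ1 hQ2 hQ hp1 hp2.
have key : alpha * m * N2 / 2 <= Kx B * d * v1.
  rewrite -/mid in F1 F2 aSC; rewrite -/v1 in cross; lra.
have cs := cs (fun u => p1 u - p2 u).
rewrite -/v1 -/N2 in cs.
have U0 : 0 <= #|U|%:R :> R by [].
have H : alpha * m * v1 * v1 <= 2 * #|U|%:R * Kx B * d * v1.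
  have h1 := ler_wpM2l (mulr_ge0 (ltW alpha0) (ltW m0)) cs.
  have h2 := ler_wpM2l U0 key.
  have -> : alpha * m * v1 * v1 = alpha * m * v1 ^+ 2 by rewrite expr2; ring.
  apply: le_trans h1 _.
  have -> : 2 * #|U|%:R * Kx B * d * v1 = 2 * (#|U|%:R * (Kx B * d * v1)) by ring.
  have -> : alpha * m * (#|U|%:R * N2) = 2 * (#|U|%:R * (alpha * m * N2 / 2)) by field.
  by apply: ler_wpM2l.
have Kd0 : 0 <= Kc B * d / alpha.
  by apply: divr_ge0; [apply: mulr_ge0 (Kc_ge0 B0) d0 | exact: ltW].
case: (eqVneq v1 0) => [-> // | v1n0].
have v1p : 0 < v1 by rewrite lt_def v1n0 v10.
have H' : alpha * m * v1 <= 2 * #|U|%:R * Kx B * d.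
  by rewrite -(ler_pM2r v1p).
rewrite ler_pdivlMr // -(ler_pM2r m0).
have -> : Kc B * d * m = 2 * #|U|%:R * Kx B * d by rewrite /Kc; field; rewrite gt_eqF.
by apply: le_trans H'; rewrite le_eqVlt; apply/orP; left; apply/eqP; ring.
Qed.

Lemma argmin_stable (B d : R) (Q1 Q2 : 'I_K -> U -> R) (p1 p2 : U -> R) :
  0 <= B -> 0 <= d ->
  (forall k u, `|Q1 k u| <= B) -> (forall k u, `|Q2 k u| <= B) ->
  (forall k u, `|Q1 k u - Q2 k u| <= d) -> isProb p1 -> isProb p2 ->
  (forall q, isProb q -> Fq Q1 p1 + alpha * nu p1 <= Fq Q1 q + alpha * nu q) ->
  (forall q, isProb q -> Fq Q2 p2 + alpha * nu p2 <= Fq Q2 q + alpha * nu q) ->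
  \sum_u `|p1 u - p2 u| <= Kc B * d / alpha.
Proof.
move=> B0 d0 hQ1 hQ2 hQ hp1 hp2 min1 min2.
apply: le_trans (_ : Kc B * Num.min d (2 * B) / alpha <= _); last first.
  rewrite ler_pM2r ?invr_gt0 // ler_wpM2l ?Kc_ge0 //.
  by rewrite ge_min lexx.
apply: (@argmin_core B (Num.min d (2 * B)) Q1 Q2 p1 p2) => //.
- by rewrite le_min d0 mulr_ge0.
- by rewrite ge_min lexx orbT.
- move=> k u; rewrite le_min (hQ k u) /=.
  apply: le_trans (ler_normB _ _) _; have := hQ1 k u; have := hQ2 k u; lra.
Qed.

End Argmin.
Section Gen.
Variable R : realType.

Lemma le_bigmaxR (I : finType) (F : I -> R) i :
  F i <= \big[Num.max/0]_(j : I) F j.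
Proof. by rewrite (bigD1 i) //= le_max lexx. Qed.

Lemma bigmaxR_le (I : finType) (F : I -> R) c :
  0 <= c -> (forall i, F i <= c) -> \big[Num.max/0]_(j : I) F j <= c.
Proof.
move=> c0 h; apply: (big_ind (fun y => y <= c)) => //.
by move=> x y hx hy; rewrite ge_max hx hy.
Qed.

Lemma bigmaxR_ge0 (I : finType) (F : I -> R) : 0 <= \big[Num.max/0]_(j : I) F j.
Proof.
elim: (index_enum I) => [|a l IH]; first by rewrite big_nil.
by rewrite big_cons le_max IH orbT.
Qed.

Lemma dTV_ge0 (E : finType) (p q : E -> R) : 0 <= dTV p q.
Proof. by rewrite /dTV; apply: mulr_ge0; [rewrite invr_ge0 | apply: sumr_ge0]. Qed.

Lemma dTV_sym (E : finType) (p q : E -> R) : dTV p q = dTV q p.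
Proof. by rewrite /dTV; congr (_ * _); apply: eq_bigr => e _; rewrite distrC. Qed.

Lemma dTV_tri (E : finType) (p q s : E -> R) : dTV p s <= dTV p q + dTV q s.
Proof.
rewrite /dTV -mulrDr ler_pM2l ?invr_gt0 // -big_split /=; apply: ler_sum => e _.
by apply: le_trans (ler_distD (q e) _ _) _; rewrite addrC.
Qed.

Lemma dTV_eq0 (E : finType) (p q : E -> R) : dTV p q <= 0 -> forall e, p e = q e.
Proof.
move=> h e; apply/eqP; rewrite -subr_eq0 -normr_le0.
have h2 : \sum_e `|p e - q e| <= 0 by move: h; rewrite /dTV pmulr_rle0 // invr_gt0.
apply: le_trans h2; rewrite (bigD1 e) //= lerDl sumr_ge0 //.
Qed.

Lemma prob_avg_le (E : finType) (p g : E -> R) M :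
  isProb p -> (forall e, `|g e| <= M) -> `|\sum_e p e * g e| <= M.
Proof.
move=> [p0 p1] hg; apply: le_trans (abs_sum_mul_le _ hg) _.
have -> : \sum_e `|p e| = 1 by rewrite -p1; apply: eq_bigr => e _; rewrite ger0_norm.
by rewrite mul1r.
Qed.

Variables (X U : finType) (T : nat).

Lemma dTV_le_dPi (pi pi' : nat -> X -> U -> R) t x :
  (t < T)%N -> dTV (pi t x) (pi' t x) <= dPi T pi pi'.
Proof.
move=> ht; rewrite /dPi.
apply: le_trans (le_bigmaxR _ (Ordinal ht)); exact: le_bigmaxR.
Qed.

Lemma dPi_le (pi pi' : nat -> X -> U -> R) c :
  0 <= c -> (forall t x, (t < T)%N -> dTV (pi t x) (pi' t x) <= c) ->
  dPi T pi pi' <= c.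
Proof.
move=> c0 h; apply: bigmaxR_le => // t; apply: bigmaxR_le => // x.
exact: h.
Qed.

Lemma dPi_ge0 (pi pi' : nat -> X -> U -> R) : 0 <= dPi T pi pi'.
Proof. exact: bigmaxR_ge0. Qed.

Lemma dPi_sym (pi pi' : nat -> X -> U -> R) : dPi T pi pi' = dPi T pi' pi.
Proof.
rewrite /dPi; apply: eq_bigr => t _; apply: eq_bigr => x _; exact: dTV_sym.
Qed.

Lemma dPi_tri (a b c : nat -> X -> U -> R) : dPi T a c <= dPi T a b + dPi T b c.
Proof.
apply: dPi_le; first by rewrite addr_ge0 ?dPi_ge0.
move=> t x ht; apply: le_trans (dTV_tri _ (b t x) _) _.
by apply: lerD; apply: dTV_le_dPi.
Qed.

End Gen.
Lemma sum_split_diff (R : realType) (E : finType) (a b v v' : E -> R) :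
  \sum_e a e * v e - \sum_e b e * v' e =
  \sum_e (a e - b e) * v e + \sum_e b e * (v e - v' e).
Proof. by rewrite -sumrB -big_split /=; apply: eq_bigr => e _; ring. Qed.

Section MF.
Variables (R : realType) (X U : finType) (T K : nat)
  (f : nat -> (X -> R) -> X -> U -> X -> R)
  (r : nat -> X -> U -> (X -> R) -> R)
  (Rmax Lf Lr : R) (mu0 : 'I_K -> X -> R) (w : 'I_K -> R)
  (tau m : R) (nu : (U -> R) -> R).
Hypothesis hf : forall t, (t < T)%N -> forall mu x u, isProb mu -> isProb (f t mu x u).
Hypothesis hr : forall t, (t < T)%N -> forall x u mu, isProb mu ->
      - Rmax <= r t x u mu <= Rmax.
Hypotheses (Lf0 : 0 < Lf) (Lr0 : 0 < Lr).
Hypothesis hfL : forall t, (t < T)%N -> forall x u mu mu', isProb mu -> isProb mu' ->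
      \sum_(x' : X) `|f t mu x u x' - f t mu' x u x'| <= Lf * dTV mu mu'.
Hypothesis hrL : forall t, (t < T)%N -> forall x u mu mu', isProb mu -> isProb mu' ->
      `|r t x u mu - r t x u mu'| <= Lr * dTV mu mu'.

Lemma flow_prob (pi : nat -> X -> U -> R) mu :
  isPolicy T pi -> isProb mu -> forall t, (t <= T)%N -> isProb (flow f pi mu t).
Proof.
move=> hpi hmu; elim=> [|t IH] ht //=.
have ht' : (t < T)%N by [].
have [p0 p1] := IH (ltnW ht).
split.
  move=> x'; apply: sumr_ge0 => x _; apply: sumr_ge0 => u _.
  apply: mulr_ge0; last exact: p0.
  apply: mulr_ge0; first by case: (hf ht' x u (conj p0 p1)) => h _; exact: h.
  by case: (hpi t ht' x) => h _; exact: h.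
rewrite exchange_big /= -p1; apply: eq_bigr => x _.
rewrite exchange_big /=.
have [_ s1] := hpi t ht' x.
rewrite -[RHS]mul1r -s1 mulr_suml; apply: eq_bigr => u _.
have [_ fs1] := hf ht' x u (conj p0 p1).
by rewrite -!mulr_suml fs1 mul1r.
Qed.


Lemma term3 (a a' p p' z z' : R) :
  0 <= p -> 0 <= z -> 0 <= a' -> 0 <= p' ->
  `|a * p * z - a' * p' * z'| <=
  `|a - a'| * p * z + a' * `|p - p'| * z + a' * p' * `|z - z'|.
Proof.
move=> p0 z0 a0 q0.
have -> : a * p * z - a' * p' * z' =
  (a - a') * p * z + a' * (p - p') * z + a' * p' * (z - z') by ring.
apply: le_trans (ler_normD _ _) _; apply: lerD; last first.
  by rewrite !normrM (ger0_norm a0) (ger0_norm q0).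
apply: le_trans (ler_normD _ _) _; apply: lerD.
  by rewrite !normrM (ger0_norm p0) (ger0_norm z0).
by rewrite !normrM (ger0_norm a0) (ger0_norm z0).
Qed.

Lemma flow_lip (pi pi' : nat -> X -> U -> R) mu :
  isPolicy T pi -> isPolicy T pi' -> isProb mu -> forall t, (t <= T)%N ->
  \sum_x `|flow f pi mu t x - flow f pi' mu t x| <=
  2 * t%:R * (Lf + 1) ^+ t * dPi T pi pi'.
Proof.
move=> hpi hpi' hmu; set d := dPi T pi pi'.
have d0 : 0 <= d by apply: dPi_ge0.
have A1 : 1 <= Lf + 1 by rewrite lerDr ltW.
elim=> [|t IH] ht.
  by rewrite /= big1 ?mulr0 ?mul0r // => x _; rewrite subrr normr0.
have ht' : (t < T)%N by [].
have IH' := IH (ltnW ht).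
have hm := flow_prob hpi hmu (ltnW ht); have hm' := flow_prob hpi' hmu (ltnW ht).
set z := flow f pi mu t in IH' hm *; set z' := flow f pi' mu t in IH' hm' *.
set N := \sum_x `|z x - z' x| in IH'.
have hz0 := hm.1; have hz0' := hm'.1.
rewrite /=. rewrite -/z -/z'.
apply: le_trans (_ : \sum_x' \sum_x \sum_u
   (`|f t z x u x' - f t z' x u x'| * pi t x u * z x +
    f t z' x u x' * `|pi t x u - pi' t x u| * z x +
    f t z' x u x' * pi' t x u * `|z x - z' x|) <= _).
  apply: ler_sum => x' _; rewrite -sumrB.
  apply: le_trans (ler_norm_sum _ _ _) _; apply: ler_sum => x _.
  rewrite -sumrB; apply: le_trans (ler_norm_sum _ _ _) _; apply: ler_sum => u _.
  apply: term3 => //.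
  - by case: (hpi t ht' x) => h _; exact: h.
  - by case: (hf ht' x u hm') => h _; exact: h.
  - by case: (hpi' t ht' x) => h _; exact: h.
rewrite exchange_big /=.
apply: le_trans (_ : \sum_x (Lf * dTV z z' * z x + 2 * d * z x + `|z x - z' x|) <= _).
  apply: ler_sum => x _; rewrite exchange_big /=.
  have [pp0 pp1] := hpi t ht' x; have [qq0 qq1] := hpi' t ht' x.
  apply: le_trans (_ : \sum_u (Lf * dTV z z' * pi t x u * z x +
     `|pi t x u - pi' t x u| * z x + pi' t x u * `|z x - z' x|) <= _).
    apply: ler_sum => u _.
    rewrite !big_split /= -!mulr_suml.
    have [_ fs1] := hf ht' x u hm'.
    rewrite fs1 !mul1r.
    rewrite lerD2r lerD2r ler_wpM2r ?hz0 // ler_wpM2r ?pp0 //.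
    exact: hfL.
  rewrite !big_split /= -!mulr_suml -!mulr_sumr pp1 qq1 mulr1 mul1r.
  rewrite lerD2r lerD2l ler_wpM2r ?hz0 //.
  have := dTV_le_dPi pi pi' x ht'; rewrite /dTV -/d; lra.
rewrite !big_split /= -!mulr_sumr hm.2 !mulr1 -/N.
have hN : dTV z z' = N / 2 by rewrite /dTV /N mulrC.
rewrite hN.
have hA : 0 <= (Lf + 1) ^+ t by apply: exprn_ge0; lra.
have hA1 : 1 <= (Lf + 1) ^+ t by apply: exprn_ege1.
have e1 : 2 * t.+1%:R * (Lf + 1) ^+ t.+1 * d =
   (Lf + 1) * (2 * t%:R * (Lf + 1) ^+ t * d) + 2 * (Lf + 1) ^+ t * (Lf + 1) * d.
  by rewrite exprS -natr1; ring.
rewrite e1.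
have g1 : Lf * (N / 2) + N <= (Lf + 1) * (2 * t%:R * (Lf + 1) ^+ t * d).
  have N0 : 0 <= N by rewrite sumr_ge0.
  apply: le_trans (_ : (Lf + 1) * N <= _); first by nra.
  by apply: ler_wpM2l => //; lra.
have g2 : 2 * d <= 2 * (Lf + 1) ^+ t * (Lf + 1) * d.
  have : 1 <= (Lf + 1) ^+ t * (Lf + 1) by rewrite -exprSr exprn_ege1.
  nra.
lra.
Qed.


Lemma Qb_bound (pi : nat -> X -> U -> R) (mu : nat -> X -> R) :
  forall j t, (t + j < T)%N ->
  (forall s, (t < s)%N -> (s <= t + j)%N -> isDecisionRule (pi s)) ->
  (forall s, (t <= s)%N -> (s <= t + j)%N -> isProb (mu s)) ->
  forall x u, `|Qb f r pi mu j t x u| <= j.+1%:R * `|Rmax|.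
Proof.
elim=> [|j IH] t htj hpi hmu x u /=.
  rewrite mul1r; have ht : (t < T)%N by rewrite addn0 in htj.
  have := hr ht x u (hmu t (leqnn t) (leq_addr _ _)).
  move=> /andP [h1 h2]; rewrite ler_norml.
  have := ler_norm Rmax; have := ler_norm (- Rmax); rewrite normrN.
  lra.
have ht : (t < T)%N by apply: leq_ltn_trans htj; apply: leq_addr.
apply: le_trans (ler_normD _ _) _.
have -> : j.+2%:R * `|Rmax| = `|Rmax| + j.+1%:R * `|Rmax|.
  by rewrite -(@natr1 R j.+1) mulrDl mul1r addrC.
apply: lerD.
  have := hr ht x u (hmu t (leqnn t) (leq_addr _ _)).
  move=> /andP [h1 h2]; rewrite ler_norml.
  have := ler_norm Rmax; have := ler_norm (- Rmax); rewrite normrN.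
  lra.
apply: prob_avg_le; first by apply: hf => //; apply: hmu => //; apply: leq_addr.
move=> x'; apply: prob_avg_le; first by apply: hpi => //; rewrite addnS ltnS leq_addr.
move=> u'; apply: IH.
- by rewrite addSnnS.
- by move=> s h1 h2; apply: hpi; [apply: ltn_trans h1 | rewrite -addSnnS].
- by move=> s h1 h2; apply: hmu; [apply: ltnW | rewrite -addSnnS].
Qed.

Lemma Qb_ext (pi pi' : nat -> X -> U -> R) (mu mu' : nat -> X -> R) :
  forall j t,
  (forall s, (t < s)%N -> (s <= t + j)%N -> pi s = pi' s) ->
  (forall s, (t <= s)%N -> (s <= t + j)%N -> mu s = mu' s) ->
  forall x u, Qb f r pi mu j t x u = Qb f r pi' mu' j t x u.
Proof.
elim=> [|j IH] t hpi hmu x u /=.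
  by rewrite (hmu t) // addn0.
rewrite (hmu t) ?leq_addr //; congr (_ + _); apply: eq_bigr => x' _.
congr (_ * _); rewrite (hpi t.+1) ?ltnSn ?addnS ?ltnS ?leq_addr //.
apply: eq_bigr => u' _; congr (_ * _); apply: IH.
- by move=> s h1 h2; apply: hpi; [apply: ltn_trans h1 | rewrite -addSnnS].
- by move=> s h1 h2; apply: hmu; [apply: ltnW | rewrite -addSnnS].
Qed.

Lemma bopt_min (alpha : R) S (sig : nat -> X -> U -> R) t x q :
  IsBopt T f r w tau alpha nu S sig -> (t < T)%N -> isProb q ->
  Fq w tau (fun k u => Qfun T f r sig (S k) t x u) (sig t x) + alpha * nu (sig t x)
  <= Fq w tau (fun k u => Qfun T f r sig (S k) t x u) q + alpha * nu q.
Proof.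
move=> [hpol hmin] ht hq.
have := hmin t ht x (fun _ => q) (fun _ => hq).
have eQ : forall k u, Qfun T f r (repl sig t (fun _ => q)) (S k) t x u =
                      Qfun T f r sig (S k) t x u.
  move=> k u; apply: Qb_ext => // s hs _.
  by rewrite /repl gtn_eqF.
suff -> : cost T f r w tau alpha nu (repl sig t (fun _ => q)) S t x =
   Fq w tau (fun k u => Qfun T f r sig (S k) t x u) q + alpha * nu q by [].
rewrite /cost /Fq /Zs /alph; congr (_ * ln _ + _).
  apply: eq_bigr => k _; congr (_ * expR (_ * _)); apply: eq_bigr => u _.
  by rewrite eQ /repl eqxx.
by rewrite /repl eqxx.
Qed.


Hypothesis hT : (1 <= T)%N.
Hypothesis hmu0 : forall k, isProb (mu0 k).
Hypothesis hw : isProb w.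
Hypotheses (tau0 : 0 < tau) (m0 : 0 < m).
Hypothesis hnu : strongly_convex m nu.

Definition Bq := T%:R * `|Rmax|.
Definition cF := 2 * T%:R * (Lf + 1) ^+ T.
Definition Kcc := Kc U tau m Bq.
Definition c0 := (Lr + Lf * Bq) * cF.
Definition Gc := Bq * Kcc + 1.
Definition cQ := c0 * T%:R * Gc ^+ T.
Definition alpha0 := 1 + Kcc * cQ.

Lemma Bq_ge0 : 0 <= Bq. Proof. by rewrite /Bq mulr_ge0. Qed.
Lemma cF_ge0 : 0 <= cF.
Proof. by rewrite /cF !mulr_ge0 // exprn_ge0 // addr_ge0 // ltW. Qed.
Lemma Kcc_ge0 : 0 <= Kcc. Proof. exact: (Kc_ge0 U tau0 m0 Bq_ge0). Qed.
Lemma c0_ge0 : 0 <= c0.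
Proof.
rewrite /c0; apply: mulr_ge0; last exact: cF_ge0.
apply: addr_ge0; first exact: ltW.
apply: mulr_ge0; [exact: ltW | exact: Bq_ge0].
Qed.
Lemma Gc_ge1 : 1 <= Gc.
Proof. by rewrite /Gc lerDr; apply: mulr_ge0; [exact: Bq_ge0 | exact: Kcc_ge0]. Qed.
Lemma cQ_ge0 : 0 <= cQ.
Proof.
rewrite /cQ; apply: mulr_ge0; first by apply: mulr_ge0; [exact: c0_ge0 | ].
by apply: exprn_ge0; apply: le_trans Gc_ge1.
Qed.

Lemma contraction alpha (pi pi' sig sig' : nat -> X -> U -> R) :
  alpha0 < alpha -> isPolicy T pi -> isPolicy T pi' ->
  IsBopt T f r w tau alpha nu (Bprop f mu0 pi) sig ->
  IsBopt T f r w tau alpha nu (Bprop f mu0 pi') sig' ->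
  dPi T sig sig' <= dPi T pi pi' / 2.
Proof.
move=> ha hpi hpi' hB hB'.
set d := dPi T pi pi'.
have d0 : 0 <= d by apply: dPi_ge0.
set S := Bprop f mu0 pi; set S' := Bprop f mu0 pi'.
have KQ0 : 0 <= Kcc * cQ by rewrite mulr_ge0 ?Kcc_ge0 ?cQ_ge0.
have a1 : 1 <= alpha by rewrite /alpha0 in ha; lra.
have a0 : 0 < alpha by lra.
have hS : forall k s, (s <= T)%N -> isProb (S k s).
  by move=> k s hs; apply: flow_prob.
have hS' : forall k s, (s <= T)%N -> isProb (S' k s).
  by move=> k s hs; apply: flow_prob.
have hFL : forall k s, (s <= T)%N -> dTV (S k s) (S' k s) <= cF * d.
  move=> k s hs; have := flow_lip hpi hpi' (hmu0 k) hs.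
  rewrite -/d /dTV => h.
  have A1 : 1 <= Lf + 1 by rewrite lerDr ltW.
  have h1 : (s%:R : R) <= T%:R by rewrite ler_nat.
  have h2 : (Lf + 1) ^+ s <= (Lf + 1) ^+ T by apply: ler_weXn2l.
  have h3 : s%:R * (Lf + 1) ^+ s <= T%:R * (Lf + 1) ^+ T :> R.
    by apply: ler_pM => //; apply: exprn_ge0; apply: le_trans A1.
  have h4 : s%:R * (Lf + 1) ^+ s * d <= T%:R * (Lf + 1) ^+ T * d :> R.
    by apply: ler_wpM2r.
  rewrite /cF; rewrite /S /S' /Bprop.
  have e1 : 2 * s%:R * (Lf + 1) ^+ s * d = 2 * (s%:R * (Lf + 1) ^+ s * d) by ring.
  have e2 : 2 * T%:R * (Lf + 1) ^+ T * d = 2 * (T%:R * (Lf + 1) ^+ T * d) by ring.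
  rewrite e1 in h.
  have : 0 <= T%:R * (Lf + 1) ^+ T * d.
    by rewrite mulr_ge0 // mulr_ge0 // exprn_ge0 // (le_trans _ A1).
  lra.
have hsig := hB.1; have hsig' := hB'.1.
have Qbnd : forall (sg : nat -> X -> U -> R) (SS : 'I_K -> nat -> X -> R) k t x u,
    isPolicy T sg -> (forall k s, (s <= T)%N -> isProb (SS k s)) ->
    forall j, (t + j = T.-1)%N ->
    `|Qb f r sg (SS k) j t x u| <= Bq.
  move=> sg SS k t x u hsg hSS j htj.
  apply: le_trans (@Qb_bound sg (SS k) j t _ _ _ x u) _.
  - by clear -htj hT; lia.
  - by move=> s h1 h2; apply: hsg; clear -h2 htj hT; lia.
  - by move=> s h1 h2; apply: hSS; clear -h2 htj hT; lia.
  rewrite /Bq ler_wpM2r // ler_nat; clear -htj hT; lia.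
have Amin : forall t x dl, (t < T)%N -> 0 <= dl ->
    (forall k u, `|Qfun T f r sig (S k) t x u - Qfun T f r sig' (S' k) t x u| <= dl) ->
    \sum_u `|sig t x u - sig' t x u| <= Kcc * dl / alpha.
  move=> t x dl ht dl0 hdl.
  apply: (argmin_stable hw tau0 a0 m0 hnu (B := Bq)
    (Q1 := fun k u => Qfun T f r sig (S k) t x u)
    (Q2 := fun k u => Qfun T f r sig' (S' k) t x u)) => //.
  - exact: Bq_ge0.
  - by move=> k u; apply: (Qbnd _ _ _ t) => //; clear -ht; lia.
  - by move=> k u; apply: (Qbnd _ _ _ t) => //; clear -ht; lia.
  - exact: hsig.
  - exact: hsig'.
  - by move=> q hq; apply: bopt_min.
  - by move=> q hq; apply: bopt_min.
have Qdiff : forall j t, (t + j = T.-1)%N -> forall k x u,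
    `|Qb f r sig (S k) j t x u - Qb f r sig' (S' k) j t x u| <=
    c0 * j.+1%:R * Gc ^+ j * d.
  elim=> [|j IH] t htj k x u.
    have ht : (t < T)%N by clear -htj hT; lia.
    rewrite /= expr0 !mulr1.
    apply: le_trans (hrL ht x u (hS k t (ltnW ht)) (hS' k t (ltnW ht))) _.
    apply: le_trans (ler_wpM2l (ltW Lr0) (hFL k t (ltnW ht))) _.
    have -> : c0 * d = Lr * (cF * d) + Lf * Bq * (cF * d) by rewrite /c0; ring.
    rewrite lerDl; apply: mulr_ge0; first by apply: mulr_ge0; [exact: ltW | exact: Bq_ge0].
    by apply: mulr_ge0; [exact: cF_ge0 | ].
  have ht : (t < T)%N by clear -htj hT; lia.
  have ht1 : (t.+1 < T)%N by clear -htj hT; lia.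
  have htj1 : (t.+1 + j = T.-1)%N by clear -htj hT; lia.
  set dl := c0 * j.+1%:R * Gc ^+ j * d.
  have dl0 : 0 <= dl.
    apply: mulr_ge0 => //; apply: mulr_ge0; first by apply: mulr_ge0; [exact: c0_ge0 | ].
    by apply: exprn_ge0; apply: le_trans Gc_ge1.
  have hs1 : forall x', \sum_u `|sig t.+1 x' u - sig' t.+1 x' u| <= Kcc * dl.
    move=> x'; apply: le_trans (Amin t.+1 x' dl ht1 dl0 _) _.
      move=> k' u'; rewrite /Qfun (_ : (T.-1 - t.+1 = j)%N); last by clear -htj hT; lia.
      exact: IH.
    rewrite ler_pdivrMr // ler_peMr //; apply: mulr_ge0 => //; exact: Kcc_ge0.
  have hV : forall x', `|\sum_u' sig t.+1 x' u' * Qb f r sig (S k) j t.+1 x' u' -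
       \sum_u' sig' t.+1 x' u' * Qb f r sig' (S' k) j t.+1 x' u'| <= Gc * dl.
    move=> x'.
    have -> : \sum_u' sig t.+1 x' u' * Qb f r sig (S k) j t.+1 x' u' -
       \sum_u' sig' t.+1 x' u' * Qb f r sig' (S' k) j t.+1 x' u' =
       \sum_u' (sig t.+1 x' u' - sig' t.+1 x' u') * Qb f r sig (S k) j t.+1 x' u' +
       \sum_u' sig' t.+1 x' u' * (Qb f r sig (S k) j t.+1 x' u' - Qb f r sig' (S' k) j t.+1 x' u').
      by rewrite -sumrB -big_split /=; apply: eq_bigr => u' _; ring.
    apply: le_trans (ler_normD _ _) _.
    have -> : Gc * dl = Kcc * dl * Bq + dl by rewrite /Gc; ring.
    apply: lerD.
      apply: le_trans (abs_sum_mul_le _ (M := Bq) _) _.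
        by move=> u'; apply: Qbnd.
      by apply: ler_wpM2r; [exact: Bq_ge0 | exact: hs1].
    apply: prob_avg_le; first exact: hsig'.
    by move=> u'; apply: IH.
  have hVb : forall x', `|\sum_u' sig t.+1 x' u' * Qb f r sig (S k) j t.+1 x' u'| <= Bq.
    move=> x'; apply: prob_avg_le; first exact: hsig.
    by move=> u'; apply: Qbnd.
  rewrite /=.
  set V := fun x' => \sum_u' sig t.+1 x' u' * Qb f r sig (S k) j t.+1 x' u'.
  set V' := fun x' => \sum_u' sig' t.+1 x' u' * Qb f r sig' (S' k) j t.+1 x' u'.
  have e1 : forall r1 r2 s1 s2 : R, r1 + s1 - (r2 + s2) = (r1 - r2) + (s1 - s2).
    by move=> *; ring.
  rewrite e1 sum_split_diff.
  apply: le_trans (ler_normD _ _) _.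
  have hr1 : `|r t x u (S k t) - r t x u (S' k t)| <= Lr * (cF * d).
    apply: le_trans (hrL ht x u (hS k t (ltnW ht)) (hS' k t (ltnW ht))) _.
    exact: (ler_wpM2l (ltW Lr0) (hFL k t (ltnW ht))).
  have hf1 : `|\sum_x' (f t (S k t) x u x' - f t (S' k t) x u x') *
       \sum_u' sig t.+1 x' u' * Qb f r sig (S k) j t.+1 x' u'| <= Lf * (cF * d) * Bq.
    apply: le_trans (abs_sum_mul_le _ hVb) _.
    apply: ler_wpM2r; first exact: Bq_ge0.
    apply: le_trans (hfL ht x u (hS k t (ltnW ht)) (hS' k t (ltnW ht))) _.
    exact: (ler_wpM2l (ltW Lf0) (hFL k t (ltnW ht))).
  have hf2 : `|\sum_x' f t (S' k t) x u x' *
       (\sum_u' sig t.+1 x' u' * Qb f r sig (S k) j t.+1 x' u' -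
        \sum_u' sig' t.+1 x' u' * Qb f r sig' (S' k) j t.+1 x' u')| <= Gc * dl.
    apply: prob_avg_le; first by apply: hf => //; apply: hS'; exact: ltnW.
    exact: hV.
  apply: le_trans (_ : Lr * (cF * d) + (Lf * (cF * d) * Bq + Gc * dl) <= _).
    apply: lerD => //; apply: le_trans (ler_normD _ _) _; exact: lerD.
  have GG : 1 <= Gc ^+ j.+1 by apply: exprn_ege1; exact: Gc_ge1.
  have -> : Lr * (cF * d) + (Lf * (cF * d) * Bq + Gc * dl) =
     c0 * d + c0 * j.+1%:R * Gc ^+ j.+1 * d.
    by rewrite /dl /c0 exprS; ring.
  have -> : c0 * j.+2%:R * Gc ^+ j.+1 * d =
     c0 * Gc ^+ j.+1 * d + c0 * j.+1%:R * Gc ^+ j.+1 * d.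
    by rewrite -(@natr1 R j.+1); ring.
  rewrite lerD2r; apply: ler_wpM2r => //.
  rewrite -[X in X <= _]mulr1; apply: ler_wpM2l; [exact: c0_ge0 | exact: GG].
apply: dPi_le; first by apply: mulr_ge0; [exact: d0 | rewrite invr_ge0].
move=> t x ht.
have hQt : forall k u, `|Qfun T f r sig (S k) t x u - Qfun T f r sig' (S' k) t x u|
    <= cQ * d.
  move=> k u; rewrite /Qfun; apply: le_trans (Qdiff _ t _ k x u) _; first by clear -ht; lia.
  apply: ler_wpM2r => //; rewrite /cQ.
  apply: ler_pM.
  - by apply: mulr_ge0; [exact: c0_ge0 | ].
  - by apply: exprn_ge0; apply: le_trans Gc_ge1.
  - by apply: ler_wpM2l; [exact: c0_ge0 | rewrite ler_nat; clear -ht; lia].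
  - by apply: ler_weXn2l; [exact: Gc_ge1 | clear -ht; lia].
have := Amin t x (cQ * d) ht (mulr_ge0 cQ_ge0 d0) hQt.
rewrite /dTV => h.
have : Kcc * (cQ * d) / alpha <= d.
  rewrite ler_pdivrMr // mulrA mulrC; apply: ler_wpM2l => //.
  rewrite /alpha0 in ha; lra.
lra.
Qed.


End MF.

From mathcomp Require Import classical_sets.

Section Lim.
Variable R : realType.

Lemma exists_small (C eps : R) : 0 <= C -> 0 < eps -> exists N : nat, C / 2 ^+ N < eps.
Proof.
move=> C0 e0.
have h0 : 0 <= C / eps by rewrite divr_ge0 // ltW.
have hN := archi_boundP h0.
set N := Num.Def.archi_bound _ in hN.
exists N.
have h2 : (N%:R : R) < 2 ^+ N.
  by rewrite -natrX ltr_nat; apply: ltn_expl.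
have h3 : C / eps < 2 ^+ N by apply: lt_trans h2.
have p2 : 0 < (2 : R) ^+ N by apply: exprn_gt0.
rewrite ltr_pdivrMr // in h3.
rewrite ltr_pdivrMr // mulrC //.
Qed.

Lemma geo_zero (C y : R) : 0 <= C -> (forall N : nat, `|y| <= C / 2 ^+ N) -> y = 0.
Proof.
move=> C0 h; apply/eqP; apply/negPn/negP => hy.
have hy0 : 0 < `|y| by rewrite normr_gt0.
have [N hN] := exists_small C0 hy0.
by have := h N; rewrite leNgt hN.
Qed.

Lemma cauchy_sup (a e : nat -> R) :
  (forall j, 0 <= e j) -> (forall j k, (j <= k)%N -> `|a j - a k| <= e j) ->
  forall k, `|a k - sup (fun y => exists j, y = a j - e j)| <= e k.
Proof.
move=> e0 h k.
set E := (fun y => exists j, y = a j - e j).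
have ubk : forall k', forall y, E y -> y <= a k' + e k'.
  move=> k' y [j ->].
  case: (leqP j k') => hjk.
    have := h j k' hjk; rewrite ler_norml => /andP [_ h2].
    have := e0 k'; lra.
  have := h k' j (ltnW hjk); rewrite ler_norml => /andP [h1 _].
  have := e0 j; lra.
have hub : has_ubound E by exists (a 0%N + e 0%N) => y Ey; exact: ubk.
have hne : exists x, E x by exists (a k - e k); exists k.
have s1 : a k - e k <= sup E by apply: ub_le_sup => //; exists k.
have s2 : sup E <= a k + e k by apply: ge_sup => // y Ey; exact: ubk.
rewrite ler_norml; apply/andP; split; lra.
Qed.

End Lim.
Lemma dPi_refl (R : realType) (X U : finType) (T : nat) (a : nat -> X -> U -> R) :
  dPi T a a <= 0.
Proof.
apply: dPi_le => // t x _; rewrite /dTV big1 ?mulr0 // => u _.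
by rewrite subrr normr0.
Qed.

Lemma cost_ext (R : realType) (X U : finType) (T K : nat)
  (f : nat -> (X -> R) -> X -> U -> X -> R)
  (r : nat -> X -> U -> (X -> R) -> R) (w : 'I_K -> R) (tau alpha : R)
  (nu : (U -> R) -> R) (pi pi' : nat -> X -> U -> R) S t x :
  (forall s, (s < T)%N -> pi s = pi' s) -> (t < T)%N ->
  cost T f r w tau alpha nu pi S t x = cost T f r w tau alpha nu pi' S t x.
Proof.
move=> hpp ht; rewrite /cost (hpp t ht); congr (_ * ln _ + _).
apply: eq_bigr => k _; congr (_ * expR (_ * _)); apply: eq_bigr => u _.
congr (_ * _); rewrite /Qfun; apply: Qb_ext => // s h1 h2; apply: hpp.
by clear -ht h2; lia.
Qed.

Section Main.
Variables (R : realType) (X U : finType) (T K : nat)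
  (f : nat -> (X -> R) -> X -> U -> X -> R)
  (r : nat -> X -> U -> (X -> R) -> R)
  (Rmax Lf Lr : R) (mu0 : 'I_K -> X -> R) (w : 'I_K -> R)
  (tau m : R) (nu : (U -> R) -> R).
Hypothesis hf : forall t, (t < T)%N -> forall mu x u, isProb mu -> isProb (f t mu x u).
Hypothesis hr : forall t, (t < T)%N -> forall x u mu, isProb mu ->
      - Rmax <= r t x u mu <= Rmax.
Hypotheses (Lf0 : 0 < Lf) (Lr0 : 0 < Lr).
Hypothesis hfL : forall t, (t < T)%N -> forall x u mu mu', isProb mu -> isProb mu' ->
      \sum_(x' : X) `|f t mu x u x' - f t mu' x u x'| <= Lf * dTV mu mu'.
Hypothesis hrL : forall t, (t < T)%N -> forall x u mu mu', isProb mu -> isProb mu' ->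
      `|r t x u mu - r t x u mu'| <= Lr * dTV mu mu'.
Hypothesis hT : (1 <= T)%N.
Hypothesis hmu0 : forall k, isProb (mu0 k).
Hypothesis hw : isProb w.
Hypotheses (tau0 : 0 < tau) (m0 : 0 < m).
Hypothesis hnu : strongly_convex m nu.

Lemma main_sec : exists a0 : R, forall alpha : R, a0 < alpha -> 0 < alpha ->
    (forall S, isFlowSet T mu0 S -> exists pi, IsBopt T f r w tau alpha nu S pi) ->
    forall pis : nat -> nat -> X -> U -> R,
      isPolicy T (pis 0%N) ->
      (forall j, IsBopt T f r w tau alpha nu (Bprop f mu0 (pis j)) (pis j.+1)) ->
      exists pistar : nat -> X -> U -> R,
        isPolicy T pistar /\
        (forall eps : R, 0 < eps -> exists N : nat, forall j, (N <= j)%N ->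
           dPi T (pis j) pistar < eps) /\
        IsMFRQE T f r w tau alpha nu mu0 pistar (Bprop f mu0 pistar).
Proof.
have contr := contraction hf hr Lf0 Lr0 hfL hrL hT hmu0 hw tau0 m0 hnu.
exists (alpha0 U T Rmax Lf Lr tau m) => alpha ha apos hex pis hp0 hstep.
have hpol : forall j, isPolicy T (pis j) by case=> [|j] //; exact: (hstep j).1.
set c := dPi T (pis 0%N) (pis 1%N).
have c0 : 0 <= c by apply: dPi_ge0.
have p2 : forall j, 0 < (2 : R) ^+ j by move=> j; apply: exprn_gt0.
have geo : forall j, dPi T (pis j) (pis j.+1) <= c / 2 ^+ j.
  elim=> [|j IH]; first by rewrite expr0 divr1.
  apply: le_trans (contr _ _ _ _ _ ha (hpol j) (hpol j.+1) (hstep j) (hstep j.+1)) _.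
  have -> : c / 2 ^+ j.+1 = c / 2 ^+ j / 2.
    by rewrite exprS; field; rewrite gt_eqF ?p2.
  by rewrite ler_pM2r ?invr_gt0.
have cauchy : forall j n,
    dPi T (pis j) (pis (j + n)%N) <= 2 * c / 2 ^+ j - 2 * c / 2 ^+ (j + n).
  move=> j; elim=> [|n IH]; first by rewrite addn0 subrr dPi_refl.
  apply: le_trans (dPi_tri T _ (pis (j + n)%N) _) _.
  rewrite addnS.
  have := geo (j + n)%N.
  have -> : 2 * c / 2 ^+ (j + n).+1 = c / 2 ^+ (j + n).
    by rewrite exprS; field; rewrite gt_eqF ?p2.
  lra.
set E := fun j => 4 * c / 2 ^+ j.
have E0 : forall j, 0 <= E j by move=> j; rewrite /E divr_ge0 ?mulr_ge0 // ltW.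
have coord : forall t x u, (t < T)%N -> forall j k, (j <= k)%N ->
    `|pis j t x u - pis k t x u| <= E j.
  move=> t x u ht j k hjk.
  have hk : k = (j + (k - j))%N by rewrite subnKC.
  have h1 := cauchy j (k - j)%N; rewrite -hk in h1.
  have h2 := dTV_le_dPi (pis j) (pis k) x ht.
  have h3 : `|pis j t x u - pis k t x u| <= \sum_u' `|pis j t x u' - pis k t x u'|.
    by rewrite (bigD1 u) //= lerDl sumr_ge0.
  have h4 : 0 <= 2 * c / 2 ^+ k by rewrite divr_ge0 ?mulr_ge0 // ltW.
  have -> : E j = 2 * (2 * c / 2 ^+ j) by rewrite /E; field; rewrite gt_eqF.
  move: h2; rewrite /dTV; lra.
set pistar : nat -> X -> U -> R :=
  fun t x u => sup (fun y => exists j, y = pis j t x u - E j).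
have hlim : forall t x u, (t < T)%N -> forall k, `|pis k t x u - pistar t x u| <= E k.
  by move=> t x u ht; apply: cauchy_sup => // j k; apply: coord.
have C0 : 0 <= 4 * c by rewrite mulr_ge0.
have hpstar : isPolicy T pistar.
  move=> t ht x; have [pp0 pp1] := hpol 0%N t ht x; split.
    move=> u; case: (lerP 0 (pistar t x u)) => // hneg.
    suff : pistar t x u = 0 by move=> e; rewrite e ltxx in hneg.
    apply: (geo_zero C0) => N.
    have h1 := hlim t x u ht N; have [q0 _] := hpol N t ht x; have h2 := q0 u.
    rewrite ltr0_norm //; move: h1; rewrite ler_norml /E => /andP [h3 h4]; lra.
  apply/eqP; rewrite -subr_eq0; apply/eqP.
  apply: (geo_zero (mulr_ge0 (ler0n _ #|U|) C0)) => N.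
  have [_ q1] := hpol N t ht x.
  rewrite -{1}q1 -sumrB.
  apply: le_trans (ler_norm_sum _ _ _) _.
  apply: le_trans (_ : \sum_u E N <= _).
    by apply: ler_sum => u _; rewrite distrC; apply: hlim.
  by rewrite sumr_const /E -[(4 * c / 2 ^+ N) *+ _]mulr_natl mulrA.
have conv_bound : forall k, dPi T (pis k) pistar <= #|U|%:R * E k.
  move=> k; apply: dPi_le; first by rewrite mulr_ge0.
  move=> t x ht; rewrite /dTV.
  have : \sum_u `|pis k t x u - pistar t x u| <= #|U|%:R * E k.
    apply: le_trans (_ : \sum_u E k <= _); first by apply: ler_sum => u _; apply: hlim.
    by rewrite sumr_const -[(E k) *+ _]mulr_natl.
  have : 0 <= \sum_u `|pis k t x u - pistar t x u| by rewrite sumr_ge0.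
  lra.
have UC0 : 0 <= #|U|%:R * (4 * c) by rewrite mulr_ge0.
have eUE : forall k, #|U|%:R * E k = #|U|%:R * (4 * c) / 2 ^+ k.
  by move=> k; rewrite /E mulrA.
have conv : forall eps : R, 0 < eps -> exists N : nat, forall j, (N <= j)%N ->
    dPi T (pis j) pistar < eps.
  move=> eps e0; have [N hN] := exists_small UC0 e0.
  exists N => j hj; apply: le_lt_trans (conv_bound j) _.
  rewrite eUE; apply: le_lt_trans hN.
  apply: ler_wpM2l => //; rewrite lef_pV2 ?posrE //.
  by apply: ler_weXn2l; [rewrite ler1n | exact: hj].
have hflow : isFlowSet T mu0 (Bprop f mu0 pistar).
  move=> k; split => // t ht; rewrite /Bprop; exact: (flow_prob hf hpstar (hmu0 k) ht).
have [sig hsig] := hex _ hflow.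
have dfix : forall j, `|dPi T pistar sig| <= #|U|%:R * (4 * c) / 2 ^+ j.
  move=> j; rewrite ger0_norm ?dPi_ge0 //.
  apply: le_trans (dPi_tri T _ (pis j.+1) _) _.
  rewrite dPi_sym.
  have h1 := conv_bound j.+1.
  have h2 := contr _ _ _ _ _ ha (hpol j) hpstar (hstep j) hsig.
  have h3 := conv_bound j.
  rewrite !eUE in h1 h3.
  have e2 : #|U|%:R * (4 * c) / 2 ^+ j.+1 = #|U|%:R * (4 * c) / 2 ^+ j / 2.
    by rewrite exprS; field; rewrite gt_eqF ?p2.
  rewrite e2 in h1.
  lra.
have d0 : dPi T pistar sig = 0 := geo_zero UC0 dfix.
have heq : forall t, (t < T)%N -> pistar t = sig t.
  move=> t ht; apply: boolp.funext => x; apply: boolp.funext => u.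
  apply: dTV_eq0; have := dTV_le_dPi pistar sig x ht; by rewrite d0.
exists pistar; split => //; split => //; split => //.
split => // t ht x p hp.
have := hsig.2 t ht x p hp.
rewrite (@cost_ext _ _ _ T _ f r w tau alpha nu pistar sig) //.
rewrite (@cost_ext _ _ _ T _ f r w tau alpha nu (repl pistar t p) (repl sig t p)) //.
move=> s hs; rewrite /repl; case: (s == t) => //; exact: heq.
Qed.

End Main.

Unset Implicit Arguments. Set Strict Implicit. Set Printing Implicit Defensive.

Theorem theorem3 (R : realType) (X U : finType) (T K : nat)
  (f : nat -> (X -> R) -> X -> U -> X -> R)
  (r : nat -> X -> U -> (X -> R) -> R)
  (Rmax Lf Lr : R) (mu0 : 'I_K -> X -> R) (w : 'I_K -> R)
  (tau m : R) (nu : (U -> R) -> R) :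
  (0 < #|X|)%N -> (0 < #|U|)%N -> (1 <= T)%N ->
  (forall t, (t < T)%N -> forall mu x u, isProb mu -> isProb (f t mu x u)) ->
  (forall t, (t < T)%N -> forall x u mu, isProb mu ->
      - Rmax <= r t x u mu <= Rmax) ->
  0 < Lf -> 0 < Lr ->
  (forall t, (t < T)%N -> forall x u mu mu', isProb mu -> isProb mu' ->
      \sum_(x' : X) `|f t mu x u x' - f t mu' x u x'| <= Lf * dTV mu mu') ->
  (forall t, (t < T)%N -> forall x u mu mu', isProb mu -> isProb mu' ->
      `|r t x u mu - r t x u mu'| <= Lr * dTV mu mu') ->
  (forall k, isProb (mu0 k)) -> isProb w ->
  0 < tau -> 0 < m -> strongly_convex m nu ->
  exists alpha0 : R, forall alpha : R, alpha0 < alpha -> 0 < alpha ->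
    (* standing assumption: B_opt^RQE(S) is well defined *)
    (forall S, isFlowSet T mu0 S -> exists pi, IsBopt T f r w tau alpha nu S pi) ->
    forall pis : nat -> nat -> X -> U -> R,
      isPolicy T (pis 0%N) ->
      (forall j, IsBopt T f r w tau alpha nu (Bprop f mu0 (pis j)) (pis j.+1)) ->
      exists pistar : nat -> X -> U -> R,
        isPolicy T pistar /\
        (forall eps : R, 0 < eps -> exists N : nat, forall j, (N <= j)%N ->
           dPi T (pis j) pistar < eps) /\
        IsMFRQE T f r w tau alpha nu mu0 pistar (Bprop f mu0 pistar).
Proof.
move=> hX hU hT hf hr Lf0 Lr0 hfL hrL hmu0 hw tau0 m0 hnu.
exact: (main_sec hf hr Lf0 Lr0 hfL hrL hT hmu0 hw tau0 m0 hnu).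
Qed.
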